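(* Let $k,n,j\in\mathbb N_0$ and $Y\in\mathcal H^d_n$. If $j\ge k$, then for every $\xi\in\mathbb S^{d-1}$, $$\Delta^k\big[(1-\|x\|^2)^jY(x)\big]\Big|_{x=\xi}=4^k(-j)_k(-k)_{j-k}\frac{(n+\frac d2)_k}{(n+\frac d2)_{j-k}}\,Y(\xi),$$ and if $j<k$ the left-hand side is $0$.
   Context: $\mathcal H^d_n$ is the space of homogeneous harmonic polynomials of degree $n$ in $d$ variables, $\mathbb S^{d-1}$ the unit sphere, $\Delta$ the Laplacian in $\mathbb R^d$, and $(a)_0=1$, $(a)_m=a(a+1)\cdots(a+m-1)$ for $m\in\mathbb N$. *)

(* Defs.v *)
From mathcomp Require Import all_boot all_order all_algebra.
From mathcomp Require Import mpoly.
Set Implicit Arguments. Unset Strict Implicit. Unset Printing Implicit Defensive.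
Import Order.TTheory GRing.Theory Num.Theory.
Local Open Scope ring_scope.

Definition poch {R : ringType} (a : R) (m : nat) : R :=
  \prod_(i < m) (a + i%:R).

Definition laplacian {R : ringType} {d : nat} (p : {mpoly R[d]}) : {mpoly R[d]} :=
  \sum_(i < d) mderiv i (mderiv i p).

Definition normsq {R : ringType} {d : nat} : {mpoly R[d]} :=
  \sum_(i < d) 'X_i ^+ 2.

Definition harmonic_homog {R : ringType} (d n : nat) (Y : {mpoly R[d]}) : Prop :=
  Y \is n.-homog /\ laplacian Y = 0.

Definition on_sphere {R : ringType} {d : nat} (xi : 'I_d -> R) : Prop :=
  \sum_(i < d) xi i ^+ 2 = 1.

(* Main.v *)
Require Import Defs.
From mathcomp Require Import all_boot all_order all_algebra.
From mathcomp Require Import mpoly.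
From mathcomp Require Import ring zify.
Set Implicit Arguments. Unset Strict Implicit. Unset Printing Implicit Defensive.
Import Order.TTheory GRing.Theory Num.Theory.
Local Open Scope ring_scope.

Section Poly.
Variables (R : realFieldType) (d : nat).
Local Notation P := {mpoly R[d]}.
Implicit Types (p q : P).

Lemma lapD p q : laplacian (p + q) = laplacian p + laplacian q.
Proof. by rewrite /laplacian -big_split /=; apply: eq_bigr => i _; rewrite !mderivD. Qed.
Lemma lapN p : laplacian (- p) = - laplacian p.
Proof. by rewrite /laplacian -sumrN; apply: eq_bigr => i _; rewrite !mderivN. Qed.
Lemma lapB p q : laplacian (p - q) = laplacian p - laplacian q.
Proof. by rewrite lapD lapN. Qed.
Lemma lapMn p k : laplacian (p *+ k) = laplacian p *+ k.
Proof. by rewrite /laplacian -sumrMnl; apply: eq_bigr => i _; rewrite !mderivMn. Qed.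
Lemma lap0 : laplacian (0 : P) = 0.
Proof. by rewrite -(mulr0n (0:P)) lapMn mulr0n. Qed.

Lemma iter_lapB k p q : iter k laplacian (p - q) = iter k laplacian p - iter k laplacian q.
Proof. by elim: k => //= k ->; rewrite lapB. Qed.
Lemma iter_lapMn k p m : iter k laplacian (p *+ m) = iter k laplacian p *+ m.
Proof. by elim: k => //= k ->; rewrite lapMn. Qed.
Lemma iter_lap0 k : iter k laplacian (0 : P) = 0.
Proof. by elim: k => //= k ->; rewrite lap0. Qed.

Lemma mderivXU i (l : 'I_d) : mderiv i ('X_l : P) = (l == i)%:R.
Proof.
rewrite mderivX mnm1E; case: eqP => [->|_]; last by rewrite scale0r.
have -> : (U_(i) - U_(i) = 0)%MM by apply/mnmP => t; rewrite !mnmE subnn.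
by rewrite mpolyX0 scale1r.
Qed.

Lemma mderiv_normsq i : mderiv i (normsq : P) = 'X_i *+ 2.
Proof.
rewrite /normsq raddf_sum (bigD1 i) //= big1 ?addr0.
  by rewrite expr2 mderivM mderivXU eqxx mul1r mulr1 mulr2n.
move=> l /negbTE hl; rewrite expr2 mderivM mderivXU hl mul0r mulr0 addr0 //.
Qed.

Definition u : P := 1 - normsq.
Lemma mderiv_u i : mderiv i u = - ('X_i *+ 2).
Proof. by rewrite /u mderivB mderiv_normsq -mpolyC1 mderivC sub0r. Qed.
Lemma mderiv2_u i : mderiv i (mderiv i u) = - 2%:R.
Proof. by rewrite mderiv_u mderivN mderivMn mderivXU eqxx. Qed.

Definition eul p : P := \sum_i 'X_i * mderiv i p.

Lemma lap_u p : laplacian (u * p) = u * laplacian p - (p *+ (2 * d) + eul p *+ 4).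
Proof.
rewrite /laplacian /eul mulr_sumr.
have -> : \sum_(i < d) mderiv i (mderiv i (u * p)) =
  \sum_(i < d) (u * mderiv i (mderiv i p) - (p *+ 2 + ('X_i * mderiv i p) *+ 4)).
  apply: eq_bigr => i _.
  rewrite mderivM mderivD !mderivM mderiv2_u mderiv_u.
  idtac.
  ring.
rewrite sumrB big_split /= -!sumrMnl; congr (_ - (_ + _)).
by rewrite sumr_const card_ord -mulrnA mulnC.
Qed.

Lemma eul_u p : eul (u * p) = u * eul p + ((u - 1) *+ 2) * p.
Proof.
rewrite /eul mulr_sumr.
have -> : \sum_(i < d) 'X_i * mderiv i (u * p) =
  \sum_(i < d) (u * ('X_i * mderiv i p) - ('X_i ^+ 2 *+ 2) * p).
  by apply: eq_bigr => i _; rewrite mderivM mderiv_u; ring.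
have hs : \sum_(i < d) ('X_i ^+ 2 *+ 2) * p = (normsq *+ 2) * p.
  by rewrite -mulr_suml -sumrMnl.
rewrite sumrB hs /u; ring.
Qed.

Lemma mderiv_sumL i (s : seq 'X_{1..d}) (F : 'X_{1..d} -> P) :
  mderiv i (\sum_(m <- s) F m) = \sum_(m <- s) mderiv i (F m).
Proof.
elim: s => [|m s IH]; first by rewrite !big_nil mderiv0.
by rewrite !big_cons mderivD IH.
Qed.

Lemma eul_homog n (Y : P) : Y \is n.-homog -> eul Y = Y *+ n.
Proof.
move=> /dhomogP hY.
rewrite /eul {1 2}(mpolyE Y).
rewrite (eq_bigr (fun i => \sum_(m <- msupp Y) Y@_m *: ('X_i * mderiv i 'X_[m]))); last first.
  move=> i _; rewrite mderiv_sumL mulr_sumr; apply: eq_bigr => m _.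
  by rewrite mderivZ -scalerAr.
rewrite exchange_big /= -sumrMnl big_seq [RHS]big_seq; apply: eq_bigr => m hm.
rewrite -scaler_sumr scalerMnr; congr (_ *: _).
have -> : n = (\sum_(i < d) m i)%N by rewrite -(hY m hm) /= mdegE.
rewrite -sumrMnr; apply: eq_bigr => i _.
rewrite mderivX -scalerAr -mulr_natl.
have [->|hmi] := eqVneq (m i) 0%N; first by rewrite !mul0r mulr0n scale0r.
by rewrite -mpolyXD addmC submK ?lep1mP // mulr1 scaler_nat.

Qed.

Section G.
Variables (n : nat) (Y : P).
Hypothesis hY : harmonic_homog n Y.

Definition G j := u ^+ j * Y.
Lemma GS j : G j.+1 = u * G j.
Proof. by rewrite /G exprS mulrA. Qed.

Lemma eulG j : eul (G j) = G j *+ (n + 2 * j) - G j.-1 *+ (2 * j).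
Proof.
elim: j => [|j IH].
  by rewrite /G expr0 mul1r (eul_homog hY.1) muln0 addn0 mulr0n subr0.
rewrite GS eul_u IH; case: j IH => [|j] IH.
  rewrite /=; ring.
rewrite /= !GS; ring.
Qed.

Lemma lapG j : laplacian (G j.+1) =
  G j.-1 *+ (4 * j.+1 * j) - G j *+ (j.+1 * (4 * j + 4 * n + 2 * d)).
Proof.
elim: j => [|j IH].
  rewrite GS lap_u eulG /G expr0 mul1r hY.2 /=; ring.
rewrite GS lap_u IH eulG; case: j IH => [|j] IH.
  by rewrite /= !GS; ring.
rewrite /= !GS; ring.
Qed.

Lemma lapG0 : laplacian (G 0) = 0.
Proof. by rewrite /G expr0 mul1r hY.2. Qed.

Fixpoint V (k j : nat) : R :=
  match k with
  | 0 => (j == 0)%:R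
  | k'.+1 => match j with
             | 0 => 0
             | j'.+1 => (4 * j'.+1 * j')%:R * V k' j'.-1
                        - (j'.+1 * (4 * j' + 4 * n + 2 * d))%:R * V k' j'
             end
  end.

Lemma iterG (xi : 'I_d -> R) (hxi : on_sphere xi) k j :
  (iter k laplacian (G j)).@[xi] = V k j * Y.@[xi].
Proof.
elim: k j => [|k IH] j.
  have hX : forall (p : P) m, (p ^+ m).@[xi] = p.@[xi] ^+ m.
    by move=> p; elim => [|m IHm]; rewrite ?expr0 ?meval1 // !exprS mevalM IHm.
  have hs : normsq.@[xi] = 1.
    rewrite /normsq -hxi.
    elim: (index_enum _) => [|i s IHs]; first by rewrite !big_nil meval0.
    by rewrite !big_cons mevalD IHs hX mevalXU.
  by rewrite /= /G mevalM hX /u mevalB meval1 hs subrr expr0n.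
rewrite iterSr; case: j => [|j].
  by rewrite lapG0 iter_lap0 meval0 /= mul0r.
rewrite lapG iter_lapB !iter_lapMn mevalB !mevalMn !IH /=.
by rewrite mulrBl -(mulr_natl (V k j.-1 * _)) -(mulr_natl (V k j * _)) !mulrA.
Qed.

End G.

End Poly.
Section Alg.
Variable R : realFieldType.

Lemma poch0 (a : R) : poch a 0 = 1.
Proof. by rewrite /poch big_ord0. Qed.
Lemma pochS (a : R) m : poch a m.+1 = poch a m * (a + m%:R).
Proof. by rewrite /poch big_ord_recr. Qed.

Lemma pochN (N m : nat) : poch (- (N%:R) : R) m = (-1) ^+ m * (N ^_ m)%:R.
Proof.
elim: m => [|m IH]; first by rewrite poch0 ffactn0 expr0 mulr1.
rewrite pochS IH ffactnSr natrM exprS.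
have [hm|hm] := leqP m N.
  rewrite natrB //; ring.
have -> : (N ^_ m = 0)%N by apply/eqP; rewrite -leqn0 leqNgt ffact_gt0 -ltnNge.
by rewrite !mul0r !mulr0 mul0r.
Qed.

Lemma poch_pos (c : R) m : 0 < c -> 0 < poch c m.
Proof.
move=> hc; elim: m => [|m IH]; first by rewrite poch0.
by rewrite pochS mulr_gt0 // ltr_wpDr.
Qed.
End Alg.
Section VW.
Variables (R : realFieldType) (n d : nat).
Hypothesis hd : (0 < d)%N.
Let c : R := n%:R + d%:R / 2.
Definition W (k j : nat) : R :=
  if (k <= j)%N then 4 ^+ k * poch (- (j%:R)) k * poch (- (k%:R)) (j - k)
       * (poch c k / poch c (j - k)) else 0.

Lemma c_pos : 0 < c.
Proof. rewrite /c ltr_wpDl // divr_gt0 // ltr0n //. Qed.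

Lemma V0 j : V R d n 0 j = (j == 0)%:R. Proof. by []. Qed.
Lemma VS0 k : V R d n k.+1 0 = 0. Proof. by []. Qed.
Lemma VSS k i : V R d n k.+1 i.+1 = (4 * i.+1 * i)%:R * V R d n k i.-1
                        - (i.+1 * (4 * i + 4 * n + 2 * d))%:R * V R d n k i.
Proof. by []. Qed.

Lemma VW k j : V R d n k j = W k j.
Proof.
elim: k j => [|k IH] j.
  rewrite V0 /W leq0n subn0 poch0 expr0 !mul1r.
  case: j => [|j]; first by rewrite !poch0 divr1 mulr1.
  by rewrite pochN ffact0n mulr0 mul0r.
case: j => [|i]; first by rewrite VS0 /W.
rewrite VSS !IH.
have [hik|hik] := ltnP i k.
  rewrite /W !ifN; first by rewrite !mulr0 subrr.
  all: try lia.
move: hik; rewrite leq_eqVlt => /orP [/eqP <-|hik].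
  have -> : (4 * k.+1 * k)%:R * W k k.-1 = 0.
    case: k {IH} => [|k]; first by rewrite muln0 mul0r.
    by rewrite /W ifN ?mulr0 // -ltnNge.
  rewrite /W !leqnn !subnn !poch0 !pochN !ffactnn factS pochS !divr1 /c.
  rewrite !exprS.
  by field.
have [m ->] : exists m, i = (k + m.+1)%N by exists (i - k.+1)%N; lia.
have e1 : ((k + m.+1).+1 - k.+1 = m.+1)%N by lia.
have e2 : ((k + m.+1).-1 = k + m)%N by lia.
have e4 : (k + m.+1 - k = m.+1)%N by lia.
have e5 : (k + m - k = m)%N by lia.
rewrite e2 /W !ifT; last (by lia); last (by lia); last (by lia).
rewrite e1 e4 e5 !pochN.
have f4 : ((k + m.+1) ^_ k * m.+1 = (k + m.+1) * (k + m) ^_ k)%N.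
  have h1 := ffactSS (k + m) k.
  have h2 := ffactnSr (k + m).+1 k.
  have h3 : ((k + m).+1 - k = m.+1)%N by lia.
  rewrite h3 in h2; rewrite -addnS in h1 h2; by rewrite -h2 h1.
have F4 : ((k + m.+1) ^_ k)%:R = ((k + m.+1)%:R * ((k + m) ^_ k)%:R) / (m.+1)%:R :> R.
  by rewrite -natrM -f4 natrM mulfK // pnatr_eq0.
rewrite ffactSS (ffactSS k m) ffactnSr !pochS !natrM F4.
have hc := c_pos.
have pm : poch c m != 0 by rewrite gt_eqF // poch_pos.
have cm : c + m%:R != 0 by rewrite gt_eqF // ltr_wpDr.
have m1 : (m.+1)%:R != 0 :> R by rewrite pnatr_eq0.
have [hm|hm] := leqP m k.
  rewrite natrB //.
  rewrite /c in pm cm *.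
  rewrite !exprS. field.
  apply/and3P; split => //.
    have -> : n%:R * 2 + d%:R + m%:R * 2 = ((n * 2 + d + m * 2)%N)%:R :> R.
      by rewrite !natrD !natrM.
    by rewrite pnatr_eq0; lia.
  by rewrite -add1n natrD in m1.
have -> : (k ^_ m = 0)%N by apply/eqP; rewrite -leqn0 leqNgt ffact_gt0 -ltnNge.
by rewrite !(mulr0, mul0r) subrr.
Qed.
End VW.

Theorem lemma3p5 (R : realFieldType) (d k n j : nat) (Y : {mpoly R[d]})
  (hY : @harmonic_homog R d n Y) (xi : 'I_d -> R) (hxi : on_sphere xi) :
  (iter k laplacian ((1 - normsq) ^+ j * Y)).@[xi] =
  (if (k <= j)%N then
     4 ^+ k * poch (- (j%:R)) k * poch (- (k%:R)) (j - k)
       * (poch (n%:R + d%:R / 2) k / poch (n%:R + d%:R / 2) (j - k)) * Y.@[xi]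
   else 0).
Proof.
destruct d as [|d'].
  exfalso; move: hxi; rewrite /on_sphere big_ord0 => /eqP.
  by rewrite eq_sym oner_eq0.
change ((1 - normsq) ^+ j * Y) with (G Y j).
rewrite (iterG hY hxi k j) (VW R n (ltn0Sn d')) /W.
by case: ifP => _; rewrite ?mul0r.
Qed.
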